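(* Let $M$ be a matroid of rank $r$ on a finite set $E$, and let $\mathcal H$ be the set of hyperplanes of $M$. Suppose that for each $H\in\mathcal H$ a set $U_H$ is given with $\mathrm{cl}_{r-2}(U_H)=H$. Let \[ \mathcal U=\{U_H : H\in\mathcal H,\ |U_H|\ge r\}. \] Then $M=M^{(r-1)}\uparrow\mathcal U$.
   Context: For a matroid $M$ with independent sets $\mathcal I$, its rank-$k$ truncation is $M^{(k)}=(E,\{I\in\mathcal I : |I|\le k\})$. For a matroid $N$ of rank $\rho$, $T(N)=N^{(\rho-1)}$; a matroid $N'$ is an erection of $N$ if $T(N')=N$ or $N'=N$. A set $X$ is $k$-closed in $M$ if $\mathrm{cl}_M(Y)\subseteq X$ for all $Y\subseteq X$ with $|Y|\le k$; $\mathrm{cl}_k(X)$ is the intersection of all $k$-closed sets containing $X$ (so $\mathrm{cl}_k(X)$ is the smallest $k$-closed superset of $X$). Knuth's procedure on input a matroid $N$ of rank $\rho$ on $E$ and $\mathcal U\subseteq 2^E$: initialise $\mathcal H\leftarrow\mathcal U\cup\{F\cup\{e\}: F \text{ a hyperplane of } N,\ e\notin F\}$; while there are distinct $H,H'\in\mathcal H$ with $r_N(H\cap H')=\rho$, replace them by $H\cup H'$. It is known (Knuth) that the output $\mathcal H(N,\mathcal U)$ does not depend on the choices made and is the set of rank-$\rho$ flats of an erection of $N$; $N\uparrow\mathcal U$ denotes this erection (it equals $N$ when $\mathcal H(N,\mathcal U)=\{E\}$, and otherwise has rank $\rho+1$). *)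

(* Defs.v *)
From Stdlib Require Import Relations.
From mathcomp Require Import all_boot.
Set Implicit Arguments. Unset Strict Implicit. Unset Printing Implicit Defensive.

Section Matroids.
Variable E : finType.
Implicit Types (I : {set {set E}}) (X Y Z : {set E}).

(* Independence axioms of a matroid on the ground set E (the whole finType). *)
Definition is_matroid I : Prop :=
  [/\ set0 \in I,
      (forall X Y, Y \in I -> X \subset Y -> X \in I) &
      (forall X Y, X \in I -> Y \in I -> #|X| < #|Y| ->
          exists2 e, e \in Y :\: X & e |: X \in I)].

Definition rk I X : nat := \max_(Y in I | Y \subset X) #|Y|.
Definition mrank I : nat := rk I setT.
Definition cl I X : {set E} := [set e | rk I (e |: X) == rk I X].
Definition flat I X : bool := cl I X == X.
Definition flats_of_rank I (k : nat) : {set {set E}} :=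
  [set X | flat I X & rk I X == k].
Definition hyperplanes I : {set {set E}} := flats_of_rank I (mrank I).-1.

Definition truncation I (k : nat) : {set {set E}} := [set X in I | #|X| <= k].

Definition kclosed I (k : nat) X : bool :=
  [forall Y : {set E}, (Y \subset X) ==> (#|Y| <= k) ==> (cl I Y \subset X)].
Definition clk I (k : nat) X : {set E} :=
  \bigcap_(Z | kclosed I k Z && (X \subset Z)) Z.

Definition knuth_init N (U : {set {set E}}) : {set {set E}} :=
  U :|: [set X | [exists F in hyperplanes N, exists e in ~: F, X == e |: F]].

Definition knuth_step N (Hs Hs' : {set {set E}}) : Prop :=
  exists H H', [/\ H \in Hs, H' \in Hs, H != H',
                   rk N (H :&: H') = mrank N &
                   Hs' = (Hs :\ H :\ H') :|: [set H :|: H']].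

Definition knuth_terminal N (Hs : {set {set E}}) : Prop :=
  forall H H', H \in Hs -> H' \in Hs -> H != H' -> rk N (H :&: H') <> mrank N.

Definition knuth_output N U (Hs : {set {set E}}) : Prop :=
  clos_refl_trans _ (knuth_step N) (knuth_init N U) Hs /\ knuth_terminal N Hs.

Definition is_knuth_erection M N U : Prop :=
  (exists Hs, knuth_output N U Hs) /\
  forall Hs, knuth_output N U Hs ->
    (Hs = [set setT] /\ M = N) \/
    [/\ Hs <> [set setT], mrank M = (mrank N).+1 &
        flats_of_rank M (mrank N) = Hs].

End Matroids.

(* Main.v *)
Require Import Defs.
From Stdlib Require Import Relations.
From mathcomp Require Import all_boot.
From mathcomp Require Import zify.
Set Implicit Arguments. Unset Strict Implicit. Unset Printing Implicit Defensive.

Lemma rk_ge (E : finType) (I : {set {set E}}) (X Y : {set E}) :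
  Y \in I -> Y \subset X -> #|Y| <= rk I X.
Proof.
move=> YI YX; rewrite /rk.
by apply: (@leq_bigmax_cond _ (fun Y => (Y \in I) && (Y \subset X)) (fun Y => #|Y|) Y); rewrite YI YX.
Qed.

Lemma rk_wit (E : finType) (I : {set {set E}}) (X : {set E}) :
  set0 \in I -> exists2 Y, (Y \in I) && (Y \subset X) & #|Y| = rk I X.
Proof.
move=> I0.
have hA : 0 < #|[pred Y : {set E} | (Y \in I) && (Y \subset X)]|.
  by apply/card_gt0P; exists set0; rewrite inE I0 sub0set.
have [Y0 HY0 HE] := eq_bigmax_cond (fun Y : {set E} => #|Y|) hA.
by exists Y0; [move: HY0; rewrite inE | rewrite /rk -HE].
Qed.

Lemma rk_le_card (E : finType) (I : {set {set E}}) (X : {set E}) : rk I X <= #|X|.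
Proof. by apply/bigmax_leqP => Y /andP [_ YX]; apply: subset_leq_card. Qed.

Lemma rk_mono (E : finType) (I : {set {set E}}) (X Y : {set E}) :
  set0 \in I -> X \subset Y -> rk I X <= rk I Y.
Proof.
move=> I0 XY; have [Z /andP [ZI ZX] <-] := rk_wit X I0.
apply: rk_ge => //; exact: subset_trans ZX XY.
Qed.

Lemma rk_indep (E : finType) (I : {set {set E}}) (X : {set E}) : X \in I -> rk I X = #|X|.
Proof. by move=> XI; apply/eqP; rewrite eqn_leq rk_le_card rk_ge. Qed.

Lemma rk_card_indep (E : finType) (I : {set {set E}}) (X : {set E}) :
  set0 \in I -> rk I X = #|X| -> X \in I.
Proof.
move=> I0 h; have [Y /andP [YI YX] hY] := rk_wit X I0.
have -> : X = Y; last done.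
apply/eqP; rewrite eq_sym eqEcard YX; lia.
Qed.

Lemma rk_U1 (E : finType) (I : {set {set E}}) (hI : is_matroid I) e (X : {set E}) :
  rk I (e |: X) <= (rk I X).+1.
Proof.
case: hI => I0 Ih _.
have [K /andP [KI KX] <-] := rk_wit (e |: X) I0.
have h1 : #|K :\ e| <= rk I X.
  apply: rk_ge; first by apply: (Ih _ K) => //; apply: subsetDl.
  apply/subsetP => x; rewrite !inE => /andP [xe xK].
  by move/subsetP: KX => /(_ x xK); rewrite !inE (negbTE xe).
by rewrite (cardsD1 e K); case: (e \in K) => /=; lia.
Qed.

Lemma rk_ext_aux (E : finType) (I : {set {set E}}) (hI : is_matroid I) (X : {set E}) k :
  forall J, J \in I -> J \subset X -> rk I X - #|J| <= k ->
  exists K, [/\ K \in I, J \subset K, K \subset X & #|K| = rk I X].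
Proof.
case: hI => I0 Ih Iaug.
elim: k => [|k IH] J JI JX hk.
  exists J; split=> //; have := rk_ge JI JX; lia.
have hJ := rk_ge JI JX.
case: (ltnP #|J| (rk I X)) => hlt; last first.
  exists J; split=> //; lia.
have [Y /andP [YI YX] hY] := rk_wit X I0.
have [e eY eJ] := Iaug J Y JI YI ltac:(lia).
move: eY; rewrite inE => /andP [enJ eY].
have [K [KI JK KX hK]] := IH (e |: J) eJ
  ltac:(by rewrite subUset sub1set (subsetP YX e eY) JX)
  ltac:(by rewrite cardsU1 enJ; lia).
exists K; split=> //; exact: subset_trans (subsetUr _ _) JK.
Qed.

Lemma rk_ext (E : finType) (I : {set {set E}}) (hI : is_matroid I) (X J : {set E}) :
  J \in I -> J \subset X ->
  exists K, [/\ K \in I, J \subset K, K \subset X & #|K| = rk I X].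
Proof. by move=> JI JX; apply: (rk_ext_aux hI (k:=rk I X - #|J|)). Qed.

Lemma rk_submod (E : finType) (I : {set {set E}}) (hI : is_matroid I) (A B : {set E}) :
  rk I (A :|: B) + rk I (A :&: B) <= rk I A + rk I B.
Proof.
have I0 : set0 \in I by case: hI.
have Ih : forall X Y : {set E}, Y \in I -> X \subset Y -> X \in I by case: hI.
have [K /andP [KI KAB] hK] := rk_wit (A :&: B) I0.
have [L [LI KL LAB hL]] := rk_ext hI KI (subset_trans KAB (subset_trans (subsetIl A B) (subsetUl A B))).
have h1 : #|L :&: A| <= rk I A by apply: rk_ge; [exact: Ih _ L LI (subsetIl _ _)|exact: subsetIr].
have h2 : #|L :&: B| <= rk I B by apply: rk_ge; [exact: Ih _ L LI (subsetIl _ _)|exact: subsetIr].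
have e1 : (L :&: A) :|: (L :&: B) = L by rewrite -setIUr; apply/setIidPl.
have h3 : #|K| <= #|(L :&: A) :&: (L :&: B)|.
  apply: subset_leq_card; rewrite subsetI !subsetI KL.
  by move: KAB; rewrite subsetI => /andP [-> ->].
have := cardsUI (L :&: A) (L :&: B); rewrite e1; lia.
Qed.

Lemma subset_cl (E : finType) (I : {set {set E}}) (X : {set E}) : X \subset cl I X.
Proof. by apply/subsetP => x xX; rewrite inE (setUidPr _) // sub1set. Qed.

Lemma rk_cl (E : finType) (I : {set {set E}}) (hI : is_matroid I) (X : {set E}) :
  rk I (cl I X) = rk I X.
Proof.
have I0 : set0 \in I by case: hI.
have Ih : forall X Y : {set E}, Y \in I -> X \subset Y -> X \in I by case: hI.
have h0 := rk_mono I0 (subset_cl I X).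
apply/eqP; rewrite eqn_leq h0 andbT leqNgt; apply/negP => hlt.
have [K /andP [KI KX] hK] := rk_wit X I0.
have [L [LI KL LX hL]] := rk_ext hI KI (subset_trans KX (subset_cl I X)).
have : 0 < #|L :\: K| by rewrite cardsD (setIidPr KL); lia.
move/card_gt0P => [e]; rewrite inE => /andP [eK eL].
have := subsetP LX e eL; rewrite inE => /eqP he.
have : #|e |: K| <= rk I (e |: X).
  apply: rk_ge; first by apply: (Ih _ L) => //; rewrite subUset sub1set eL.
  exact: setUS.
by rewrite cardsU1 eK he; lia.
Qed.

Lemma cl_mono (E : finType) (I : {set {set E}}) (hI : is_matroid I) (X Y : {set E}) :
  X \subset Y -> cl I X \subset cl I Y.
Proof.
have I0 : set0 \in I by case: hI.
move=> XY; apply/subsetP => e; rewrite !inE => /eqP he.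
have h := rk_submod hI (e |: X) Y.
have e1 : (e |: X) :|: Y = e |: Y by rewrite -setUA (setUidPr XY).
rewrite e1 in h.
have h2 : rk I X <= rk I ((e |: X) :&: Y) by apply: rk_mono => //; rewrite subsetI subsetUr.
have h3 := rk_mono I0 (subsetUr [set e] Y).
rewrite eqn_leq h3 andbT; lia.
Qed.

Lemma cl_idem (E : finType) (I : {set {set E}}) (hI : is_matroid I) (X : {set E}) :
  cl I (cl I X) = cl I X.
Proof.
have I0 : set0 \in I by case: hI.
apply/eqP; rewrite eqEsubset subset_cl andbT; apply/subsetP => e.
rewrite !inE (rk_cl hI) => /eqP he.
have h1 := rk_mono I0 (setUS [set e] (subset_cl I X)).
have h2 := rk_mono I0 (subsetUr [set e] X).
rewrite eqn_leq h2 andbT; lia.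
Qed.

Lemma subset_of_card (E : finType) m : forall (K : {set E}) n, #|K| = n + m ->
  exists2 Z : {set E}, Z \subset K & #|Z| = n.
Proof.
elim: m => [|m IH] K n hK; first by exists K; rewrite // hK addn0.
have : 0 < #|K| by lia.
move/card_gt0P => [x xK].
have [Z ZK hZ] := IH (K :\ x) n ltac:(move: hK; rewrite (cardsD1 x K) xK; lia).
by exists Z => //; exact: subset_trans ZK (subsetDl _ _).
Qed.

Lemma rk_trunc (E : finType) (I : {set {set E}}) (hI : is_matroid I) k (X : {set E}) :
  rk (truncation I k) X = minn (rk I X) k.
Proof.
have I0 : set0 \in I by case: hI.
have Ih : forall X Y : {set E}, Y \in I -> X \subset Y -> X \in I by case: hI.
apply/eqP; rewrite eqn_leq; apply/andP; split.
  apply/bigmax_leqP => Y /andP [YI YX]; move: YI; rewrite inE => /andP [YI Yk].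
  rewrite leq_min Yk andbT; exact: rk_ge.
have [K /andP [KI KX] hK] := rk_wit X I0.
have [Z ZK hZ] := subset_of_card (m := #|K| - minn (rk I X) k) (K := K) (n := minn (rk I X) k) ltac:(lia).
rewrite -hZ; apply: rk_ge; last exact: subset_trans ZK KX.
rewrite inE hZ geq_minr andbT; exact: Ih _ K KI ZK.
Qed.

Lemma subset_clJ (E : finType) (I : {set {set E}}) (hI : is_matroid I) (J Y : {set E}) :
  J \subset Y -> rk I J = rk I Y -> Y \subset cl I J.
Proof.
have I0 : set0 \in I by case: hI.
move=> JY hJ; apply/subsetP => y yY; rewrite inE eqn_leq.
rewrite (rk_mono I0 (subsetUr [set y] J)) andbT hJ.
by apply: rk_mono => //; rewrite subUset sub1set yY.
Qed.

Lemma cl_kclosed (E : finType) (I : {set {set E}}) (hI : is_matroid I) k (X : {set E}) :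
  kclosed I k (cl I X).
Proof.
apply/forallP => Y; apply/implyP => YX; apply/implyP => _.
by rewrite -(cl_idem hI X); apply: cl_mono.
Qed.

Lemma sub_clk (E : finType) (I : {set {set E}}) k (X : {set E}) : X \subset clk I k X.
Proof. by apply/bigcapsP => Z /andP []. Qed.

Lemma clk_min (E : finType) (I : {set {set E}}) k (X Z : {set E}) :
  kclosed I k Z -> X \subset Z -> clk I k X \subset Z.
Proof. by move=> h1 h2; apply: (@bigcap_inf _ _ Z); rewrite h1 h2. Qed.

Lemma in_hyp (E : finType) (I : {set {set E}}) (P : {set E}) :
  (P \in hyperplanes I) = (cl I P == P) && (rk I P == (mrank I).-1).
Proof. by rewrite /hyperplanes /flats_of_rank inE. Qed.

Definition inv (E : finType) (I : {set {set E}}) (U : {set {set E}}) (Hs : {set {set E}}) : Prop :=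
  [/\ (forall A, A \in Hs -> rk I A = (mrank I).-1),
      (forall F e, cl I F = F -> rk I F = mrank I - 2 -> e \notin F ->
          exists2 A, A \in Hs & e |: F \subset A) &
      (forall X, X \in U -> exists2 A, A \in Hs & X \subset A)].

Lemma rkN (E : finType) (I : {set {set E}}) (hI : is_matroid I) (X : {set E}) :
  rk (truncation I (mrank I).-1) X = minn (rk I X) (mrank I).-1.
Proof. exact: rk_trunc. Qed.

Lemma mrankN (E : finType) (I : {set {set E}}) (hI : is_matroid I) :
  mrank (truncation I (mrank I).-1) = (mrank I).-1.
Proof. by rewrite /mrank rk_trunc // -/(mrank I); apply/minn_idPr; apply: leq_pred. Qed.

Lemma rk_le_mrank (E : finType) (I : {set {set E}}) (hI : is_matroid I) (X : {set E}) :
  rk I X <= mrank I.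
Proof. have I0 : set0 \in I by case: hI. exact: rk_mono (subsetT X). Qed.

Lemma rkU (E : finType) (I : {set {set E}}) (hI : is_matroid I) (UH : {set E} -> {set E}) P :
  P \in hyperplanes I -> clk I (mrank I - 2) (UH P) = P -> rk I (UH P) = (mrank I).-1.
Proof.
have I0 : set0 \in I by case: hI.
rewrite in_hyp => /andP [/eqP fP /eqP rP] hc.
have s1 : UH P \subset P by rewrite -{2}hc sub_clk.
have h1 := rk_mono I0 s1.
have h2 := rk_le_mrank hI (UH P).
case: (ltnP (rk I (UH P)) (mrank I).-1) => hl; last by lia.
have : P \subset cl I (UH P).
  rewrite -{1}hc; apply: clk_min; [exact: cl_kclosed | exact: subset_cl].
move/(rk_mono I0); rewrite rk_cl //; lia.
Qed.

Lemma cover_step (E : finType) (Hs : {set {set E}}) H H' (X A : {set E}) :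
  A \in Hs -> X \subset A ->
  exists2 A', A' \in (Hs :\ H :\ H') :|: [set H :|: H'] & X \subset A'.
Proof.
move=> AH XA.
case: (eqVneq A H) => [eAH|nAH].
  by exists (H :|: H'); [rewrite !inE eqxx orbT | rewrite -eAH; exact: subset_trans XA (subsetUl _ _)].
case: (eqVneq A H') => [eAH|nAH'].
  by exists (H :|: H'); [rewrite !inE eqxx orbT | rewrite -eAH; exact: subset_trans XA (subsetUr _ _)].
by exists A => //; rewrite !inE nAH nAH' AH.
Qed.

Lemma inv_step (E : finType) (I : {set {set E}}) (hI : is_matroid I) U Hs Hs' :
  inv I U Hs -> knuth_step (truncation I (mrank I).-1) Hs Hs' -> inv I U Hs'.
Proof.
move=> [ia ib ic] [H [H' [HH H'H nHH' hr ->]]].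
split.
- move=> A; rewrite !inE => /orP [/andP [_ /andP [_ AH]]|/eqP ->]; first exact: ia.
  rewrite rkN // mrankN // in hr.
  have := rk_submod hI H H'; rewrite (ia _ HH) (ia _ H'H).
  have := rk_mono (I := I) (X := H) (Y := H :|: H') ltac:(by case: hI) (subsetUl _ _).
  rewrite (ia _ HH); lia.
- move=> F e h1 h2 h3; have [A AH XA] := ib F e h1 h2 h3; exact: cover_step AH XA.
- move=> X XU; have [A AH XA] := ic X XU; exact: cover_step AH XA.
Qed.

Lemma clN (E : finType) (I : {set {set E}}) (hI : is_matroid I) (F : {set E}) :
  2 <= mrank I -> rk I F = mrank I - 2 ->
  cl (truncation I (mrank I).-1) F = cl I F.
Proof.
move=> hr hF; apply/setP => x; rewrite !inE !rkN // hF.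
have := rk_U1 hI x F; rewrite hF => h.
by apply/eqP/eqP => ?; lia.
Qed.

Lemma inv_init (E : finType) (I : {set {set E}}) (hI : is_matroid I) (UH : {set E} -> {set E}) :
  2 <= mrank I ->
  (forall H, H \in hyperplanes I -> clk I (mrank I - 2) (UH H) = H) ->
  let U := [set UH H | H in hyperplanes I & mrank I <= #|UH H|] in
  inv I U (knuth_init (truncation I (mrank I).-1) U).
Proof.
have I0 : set0 \in I by case: hI.
move=> hr hU U; split.
- move=> A; rewrite !inE => /orP [].
    case/imsetP => H; rewrite inE => /andP [HH _] ->; exact: (rkU hI HH (hU H HH)).
  move=> /existsP [F /andP [FN /existsP [e /andP [eF /eqP ->]]]].
  move: FN; rewrite in_hyp mrankN // rkN // => /andP [/eqP fF /eqP rF].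
  move: eF; rewrite inE -fF inE !rkN // => /eqP ne.
  have := rk_U1 hI e F; have := rk_mono I0 (subsetUr [set e] F).
  have := rk_le_mrank hI F. move=> *. rewrite fF. lia.
- move=> F e fF rF eF; exists (e |: F) => //.
  rewrite !inE; apply/orP; right; apply/existsP; exists F.
  rewrite in_hyp mrankN // rkN // clN // fF eqxx rF /=.
  have -> : minn (mrank I - 2) (mrank I).-1 == (mrank I).-1.-1 by apply/eqP; lia.
  by apply/existsP; exists e; rewrite inE eF eqxx.
- by move=> X XU; exists X => //; rewrite inE XU.
Qed.

Lemma inv_crt (E : finType) (I : {set {set E}}) (hI : is_matroid I) U Hs Hs' :
  clos_refl_trans _ (knuth_step (truncation I (mrank I).-1)) Hs Hs' ->
  inv I U Hs -> inv I U Hs'.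
Proof.
elim => [x y st | x | x y z _ IH1 _ IH2] // hx.
- exact: inv_step st.
- exact: IH2 (IH1 hx).
Qed.

Lemma cover_indep (E : finType) (I : {set {set E}}) (hI : is_matroid I) U Hs (B : {set E}) b :
  2 <= mrank I -> inv I U Hs -> B \in I -> #|B| = (mrank I).-1 -> b \in B ->
  exists2 C, C \in Hs & B \subset C /\ cl I (B :\ b) \subset C.
Proof.
have Ih : forall X Y : {set E}, Y \in I -> X \subset Y -> X \in I by case: hI.
move=> hr [_ ib _] BI hB bB.
have BbI : B :\ b \in I by apply: (Ih _ B) => //; apply: subsetDl.
have hBb : #|B :\ b| = (mrank I).-1.-1 by move: hB; rewrite (cardsD1 b B) bB; lia.
have [C CH sC] := ib (cl I (B :\ b)) b (cl_idem hI _)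
  ltac:(rewrite rk_cl // rk_indep // hBb; lia)
  ltac:(rewrite inE (setD1K bB) rk_indep // rk_indep // hB hBb; lia).
exists C => //; split.
  apply: subset_trans sC; rewrite -{1}(setD1K bB); apply: setUS; exact: subset_cl.
exact: subset_trans (subsetUr _ _) sC.
Qed.

Lemma member_kclosed (E : finType) (I : {set {set E}}) (hI : is_matroid I) U Hs A :
  2 <= mrank I -> inv I U Hs -> knuth_terminal (truncation I (mrank I).-1) Hs ->
  A \in Hs -> kclosed I (mrank I - 2) A.
Proof.
have I0 : set0 \in I by case: hI.
move=> hr iv term AH; have [ia _ _] := iv.
apply/forallP => Y; apply/implyP => YA; apply/implyP => hY.
have [J /andP [JI JY] hJ] := rk_wit Y I0.
have [B [BI JB BA hB]] := rk_ext hI JI (subset_trans JY YA).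
rewrite ia // in hB.
have := rk_le_card I Y; rewrite -hJ => hJY.
have : 0 < #|B :\: J| by rewrite cardsD (setIidPr JB); lia.
move/card_gt0P => [b]; rewrite inE => /andP [bJ bB].
have [C CH [BC sC]] := cover_indep hI hr iv BI hB bB.
have eAC : A = C.
  case: (eqVneq A C) => // nAC; exfalso; apply: (term A C AH CH nAC).
  rewrite rkN // mrankN //.
  apply/minn_idPr; rewrite -hB; apply: rk_ge => //; by rewrite subsetI BA BC.
rewrite eAC; apply: subset_trans sC.
have YJ : Y \subset cl I J by apply: subset_clJ => //; rewrite rk_indep.
have := cl_mono hI YJ; rewrite cl_idem // => h; apply: subset_trans h _.
apply: cl_mono => //; apply/subsetP => x xJ; rewrite !inE (subsetP JB x xJ) andbT.
by apply/eqP => exb; move: bJ; rewrite -exb xJ.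
Qed.

Lemma hyp_member (E : finType) (I : {set {set E}}) (hI : is_matroid I) (UH : {set E} -> {set E}) Hs P :
  2 <= mrank I ->
  (forall H, H \in hyperplanes I -> clk I (mrank I - 2) (UH H) = H) ->
  inv I [set UH H | H in hyperplanes I & mrank I <= #|UH H|] Hs ->
  knuth_terminal (truncation I (mrank I).-1) Hs ->
  P \in hyperplanes I -> P \in Hs.
Proof.
have I0 : set0 \in I by case: hI.
move=> hr hU iv term PH; have [ia _ ic] := iv.
have hc := hU P PH; have rU := rkU hI PH hc.
have [A AH UA] : exists2 A, A \in Hs & UH P \subset A.
  case: (leqP (mrank I) #|UH P|) => hcard.
    by apply: ic; apply/imsetP; exists P => //; rewrite inE PH hcard.
  have hle := rk_le_card I (UH P).
  have UI : UH P \in I by apply: rk_card_indep => //; lia.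
  have : 0 < #|UH P| by lia.
  move/card_gt0P => [b bU].
  have [C CH [UC _]] := cover_indep hI hr iv UI ltac:(lia) bU.
  by exists C.
have kA := member_kclosed hI hr iv term AH.
have PA : P \subset A by rewrite -{1}hc; apply: clk_min.
move: PH; rewrite in_hyp => /andP [/eqP fP /eqP rP].
suff -> : P = A by [].
apply/eqP; rewrite eqEsubset PA /=; apply/subsetP => e eA.
have : e \in cl I P; last by rewrite fP.
rewrite inE eqn_leq (rk_mono I0 (subsetUr [set e] P)) andbT rP -(ia A AH).
by apply: rk_mono => //; rewrite subUset sub1set eA PA.
Qed.

Lemma member_hyp (E : finType) (I : {set {set E}}) (hI : is_matroid I) (UH : {set E} -> {set E}) Hs A :
  2 <= mrank I ->
  (forall H, H \in hyperplanes I -> clk I (mrank I - 2) (UH H) = H) ->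
  inv I [set UH H | H in hyperplanes I & mrank I <= #|UH H|] Hs ->
  knuth_terminal (truncation I (mrank I).-1) Hs ->
  A \in Hs -> A \in hyperplanes I.
Proof.
move=> hr hU iv term AH; have [ia _ _] := iv.
have cH : cl I A \in hyperplanes I.
  by rewrite in_hyp cl_idem // eqxx /= rk_cl // ia.
have cHs := hyp_member hI hr hU iv term cH.
case: (eqVneq A (cl I A)) => [-> //|nA]; exfalso.
apply: (term A (cl I A) AH cHs nA).
rewrite (setIidPl (subset_cl I A)) rkN // mrankN // ia //; lia.
Qed.


Lemma exists_output (E : finType) (N : {set {set E}}) n :
  forall Hs : {set {set E}}, #|Hs| <= n ->
  exists Hs', clos_refl_trans _ (knuth_step N) Hs Hs' /\ knuth_terminal N Hs'.
Proof.
elim: n => [|n IH] Hs hn.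
  exists Hs; split; first exact: rt_refl.
  move=> H H' HH; move: hn; rewrite leqn0 => /eqP/cards0_eq h; by rewrite h inE in HH.
case: (boolP [exists H, exists H', [&& H \in Hs, H' \in Hs, H != H' & rk N (H :&: H') == mrank N]]).
  move=> /existsP [H /existsP [H' /and4P [HH H'H nHH' /eqP hr]]].
  set Hs' := (Hs :\ H :\ H') :|: [set H :|: H'].
  have st : knuth_step N Hs Hs' by exists H, H'; split.
  have hc : #|Hs'| <= n.
    rewrite /Hs' cardsU cards1.
    have := cardsD1 H Hs; rewrite HH.
    have := cardsD1 H' (Hs :\ H); rewrite !inE eq_sym nHH' H'H /=.
    move=> h1 h2; apply: leq_trans (leq_subr _ _) _; rewrite h2 in hn; rewrite h1 in hn; move: hn.
    by rewrite !add1n addn1 ltnS.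
  have [Hs'' [c t]] := IH Hs' hc.
  exists Hs''; split=> //; exact: rt_trans (rt_step _ _ _ _ st) c.
move=> hno; exists Hs; split; first exact: rt_refl.
move=> H H' HH H'H nHH' he; move/negP: hno; apply.
apply/existsP; exists H; apply/existsP; exists H'; by rewrite HH H'H nHH' he eqxx.
Qed.

Unset Implicit Arguments.

Theorem lemma4p1 (E : finType) (I : {set {set E}}) (UH : {set E} -> {set E}) :
  is_matroid I ->
  2 <= mrank I ->
  (forall H, H \in hyperplanes I -> clk I (mrank I - 2) (UH H) = H) ->
  is_knuth_erection I (truncation I (mrank I).-1)
    [set UH H | H in hyperplanes I & mrank I <= #|UH H|].
Proof.
move=> hI hr hU; split.
  have [Hs [c t]] := exists_output (truncation I (mrank I).-1) (leqnn #|knuth_init (truncation I (mrank I).-1) [set UH H | H in hyperplanes I & mrank I <= #|UH H|]|).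
  by exists Hs.
move=> Hs [c t].
have iv := inv_crt hI c (inv_init hI hr hU).
have eH : Hs = hyperplanes I.
  apply/setP => P; apply/idP/idP => h.
    exact: (member_hyp hI hr hU iv t h).
  exact: (hyp_member hI hr hU iv t h).
right; split.
- move=> eT; have : setT \in hyperplanes I by rewrite -eH eT inE.
  rewrite in_hyp => /andP [_ /eqP]; rewrite -/(mrank I); lia.
- rewrite mrankN //; lia.
- by rewrite mrankN // eH.
Qed.
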